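(* For every $n\ge 1$, every $\kappa\le\frac{n}{2n-1}$ and every doubly stochastic $n\times n$ matrix $\mathcal M$, there exists a directed $(2n-1)$-regular multigraph $G$ on $[n]$ whose direct throughput with respect to $\mathcal M$ is at least $\kappa$ (i.e., $G$ directly hosts $\kappa\mathcal M$).
   Context: Let $n\ge 1$ and $[n]=\{1,\dots,n\}$. Networks are finite directed multigraphs on vertex set $[n]$; self-loops and parallel arcs are allowed. A directed multigraph is directed $r$-regular if every vertex has exactly $r$ outgoing and exactly $r$ incoming arcs (a self-loop at $v$ counts as one outgoing and one incoming arc of $v$). An $n\times n$ matrix is doubly stochastic if all entries are nonnegative and every row and every column sums to $1$. In a directed $(2n-1)$-regular multigraph $G$ on $[n]$ every arc has capacity $\frac{1}{2n-1}$. $G$ directly hosts a nonnegative $n\times n$ matrix $\mathcal M=(a_{i,j})$ if the demand $a_{u,v}$ from $u$ to $v$ can be routed entirely on arcs from $u$ to $v$ without exceeding capacities, i.e., equivalently, if $a_{u,v}\le \frac{m_{u,v}}{2n-1}$ for all $u,v\in[n]$, where $m_{u,v}$ is the number of arcs from $u$ to $v$ in $G$. The direct throughput of $G$ with respect to a doubly stochastic $\mathcal M$ is the largest $\theta$ such that $G$ directly hosts $\theta\mathcal M$. *)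

(* Defs.v *)
From HB Require Import structures.
From mathcomp Require Import all_boot all_order all_algebra.
From mathcomp Require Import reals.
Set Implicit Arguments. Unset Strict Implicit. Unset Printing Implicit Defensive.
Import Order.TTheory GRing.Theory Num.Theory.
Local Open Scope ring_scope.

(* A finite directed multigraph (self-loops and parallel arcs allowed) on the
   vertex set 'I_n (= [n], shifted to 0..n-1) is given by its arc multiplicities:
   [G u v] is the number m_{u,v} of arcs from u to v. *)
Definition multidigraph (n : nat) := 'I_n -> 'I_n -> nat.

(* directed r-regular: every vertex has out-degree r and in-degree r
   (a self-loop counts once as outgoing and once as incoming). *)
Definition directed_regular (n r : nat) (G : multidigraph n) : Prop :=
  (forall u : 'I_n, (\sum_(v < n) G u v)%N = r) /\
  (forall v : 'I_n, (\sum_(u < n) G u v)%N = r).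

Definition doubly_stochastic (R : numDomainType) (n : nat) (M : 'M[R]_n) : Prop :=
  (forall i j, 0 <= M i j) /\
  (forall i, \sum_(j < n) M i j = 1) /\
  (forall j, \sum_(i < n) M i j = 1).

(* G (a (2n-1)-regular multigraph, each arc of capacity 1/(2n-1)) directly
   hosts the demand matrix A. *)
Definition directly_hosts (R : numFieldType) (n : nat) (G : multidigraph n)
    (A : 'M[R]_n) : Prop :=
  forall u v : 'I_n, A u v <= (G u v)%:R / (2 * n - 1)%N%:R.

(* Main.v *)
Require Import Defs.
From HB Require Import structures.
From mathcomp Require Import all_boot all_order all_algebra.
From mathcomp Require Import reals.
Import Order.TTheory GRing.Theory Num.Theory.

Lemma sum_full n r (f : 'I_n -> nat) :
  (forall i, f i <= r) -> \sum_(i < n) f i = \sum_(i < n) r ->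
  forall i, f i = r.
Proof.
move=> H E i.
have := @leqif_sum 'I_n (fun _ => true) (fun i => f i == r) f (fun _ => r)
  (fun i _ => leqif_eq (H i)).
move=> [_]; rewrite E eqxx => /esym/forallP/(_ i); by move/eqP.
Qed.

Lemma augment n r : forall k (G : 'I_n -> 'I_n -> nat),
  (n * r - \sum_(u < n) \sum_(v < n) G u v <= k)%N ->
  (forall u, \sum_(v < n) G u v <= r)%N ->
  (forall v, \sum_(u < n) G u v <= r)%N ->
  exists G' : 'I_n -> 'I_n -> nat, (forall u v, G u v <= G' u v)%N /\
   (forall u, \sum_(v < n) G' u v = r)%N /\ (forall v, \sum_(u < n) G' u v = r)%N.
Proof.
have cst : \sum_(i < n) r = n * r by rewrite sum_nat_const card_ord.
elim=> [|k IH] G Hk Hr Hc.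
- have Tr : \sum_(u < n) \sum_(v < n) G u v = \sum_(u < n) r.
    apply/eqP; rewrite eqn_leq leq_sum //= cst -subn_eq0 -leqn0 //.
  have Tc : \sum_(v < n) \sum_(u < n) G u v = \sum_(v < n) r.
    by rewrite exchange_big.
  exists G; split=> //; split.
  + exact: (@sum_full _ _ _ Hr Tr).
  + exact: (@sum_full _ _ _ Hc Tc).
- case: (boolP [forall u, \sum_(v < n) G u v == r]) => [/forallP Hall|].
  + have Tr : \sum_(u < n) \sum_(v < n) G u v = \sum_(u < n) r.
      by apply: eq_bigr => u _; apply/eqP.
    have Tc : \sum_(v < n) \sum_(u < n) G u v = \sum_(v < n) r.
      by rewrite exchange_big.
    exists G; split=> //; split.
    * by move=> u; apply/eqP.
    * exact: (@sum_full _ _ _ Hc Tc).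
  + move/forallPn=> [u0 Hu0].
    have Hu0' : (\sum_(v < n) G u0 v < r)%N by rewrite ltn_neqAle Hu0 Hr.
    case: (boolP [forall v, \sum_(u < n) G u v == r]) => [/forallP Hall|].
      exfalso.
      have Tc : \sum_(v < n) \sum_(u < n) G u v = \sum_(v < n) r.
        by apply: eq_bigr => v _; apply/eqP.
      rewrite exchange_big in Tc.
      by move: (@sum_full _ _ _ Hr Tc u0) Hu0 => ->; rewrite eqxx.
    move/forallPn=> [v0 Hv0].
    have Hv0' : (\sum_(u < n) G u v0 < r)%N by rewrite ltn_neqAle Hv0 Hc.
    pose G1 := fun u v => (G u v + ((u == u0) && (v == v0)))%N.
    have R1 : forall u, \sum_(v < n) G1 u v = (\sum_(v < n) G u v + (u == u0))%N.
      move=> u; rewrite big_split /=; congr (_ + _)%N.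
      rewrite (bigD1 v0) //= eqxx andbT big1 ?addn0 // => v /negbTE ->.
      by rewrite andbF.
    have C1 : forall v, \sum_(u < n) G1 u v = (\sum_(u < n) G u v + (v == v0))%N.
      move=> v; rewrite big_split /=; congr (_ + _)%N.
      rewrite (bigD1 u0) //= eqxx big1 ?addn0 // => u /negbTE ->.
      by [].
    have T1 : \sum_(u < n) \sum_(v < n) G1 u v =
              (\sum_(u < n) \sum_(v < n) G u v).+1.
      rewrite (eq_bigr _ (fun u _ => R1 u)) big_split /=.
      have s1 : \sum_(i < n) ((i == u0) : nat) = 1%N.
        by rewrite (bigD1 u0) //= eqxx big1 // => i /negbTE ->.
      by rewrite s1 addn1.
    have [G' [H1 H2]] : exists G' : 'I_n -> 'I_n -> nat,
        (forall u v, G1 u v <= G' u v)%N /\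
        (forall u, \sum_(v < n) G' u v = r)%N /\
        (forall v, \sum_(u < n) G' u v = r)%N.
      apply: IH.
      + by rewrite T1 subnS; move: Hk; case: (_ - _)%N.
      + move=> u; rewrite R1; case: eqP => [->|_]; first by rewrite addn1.
        by rewrite addn0.
      + move=> v; rewrite C1; case: eqP => [->|_]; first by rewrite addn1.
        by rewrite addn0.
    exists G'; split=> // u v; apply: leq_trans (H1 u v).
    exact: leq_addr.
Qed.

Local Open Scope ring_scope.

Theorem proposition3p5 (R : realType) (n : nat) (kappa : R) (M : 'M[R]_n) :
  (0 < n)%N ->
  kappa <= n%:R / (2 * n - 1)%N%:R ->
  doubly_stochastic M ->
  exists G : multidigraph n,
    directed_regular (2 * n - 1) G /\ directly_hosts G (kappa *: M).
Proof.
move=> hn hk [M0 [Mr Mc]].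
pose c := fun u v => `|Num.ceil (n%:R * M u v)|%N.
have hx : forall u v, 0 <= n%:R * M u v by move=> u v; rewrite mulr_ge0.
have hc : forall u v, (c u v)%:R = (Num.ceil (n%:R * M u v))%:~R :> R.
  move=> u v; rewrite natr_absz ger0_norm // ceil_ge0.
  by apply: lt_le_trans (hx u v); rewrite ltrN10.
have cge : forall u v, n%:R * M u v <= (c u v)%:R by move=> u v; rewrite hc ceil_ge.
have clt : forall u v, (c u v)%:R < n%:R * M u v + 1 :> R.
  move=> u v; rewrite hc -ltrBlDr.
  by have := ceilB1_lt (n%:R * M u v); rewrite intrD.
have hasn : has (fun _ : 'I_n => true) (index_enum 'I_n).
  by apply/hasP; exists (Ordinal hn); rewrite ?mem_index_enum.
have key : forall F : 'I_n -> R, \sum_(i < n) F i = 1 ->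
   forall f : 'I_n -> nat, (forall i, (f i)%:R < n%:R * F i + 1 :> R) ->
   (\sum_(i < n) f i <= 2 * n - 1)%N.
  move=> F F1 f hf.
  have : (\sum_(i < n) f i)%:R < (2 * n)%:R :> R.
    rewrite natr_sum; apply: lt_le_trans (ltr_sum hasn (fun i _ => hf i)) _.
    rewrite big_split /= -mulr_sumr F1 mulr1 sumr_const card_ord.
    by rewrite -natrD addnn -mul2n.
  by rewrite ltr_nat => h; rewrite -ltnS subn1 prednK // muln_gt0 hn.
have [G' [Hge [Hr Hc]]] := @augment n (2 * n - 1) (n * (2 * n - 1)) c
  (leq_subr _ _)
  (fun u => key _ (Mr u) _ (fun v => clt u v))
  (fun v => key _ (Mc v) (fun u => c u v) (fun u => clt u v)).
exists G'; split; first by split.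
move=> u v; rewrite mxE.
have hd : 0 < (2 * n - 1)%N%:R :> R.
  by rewrite ltr0n subn_gt0; exact: (leq_mul (leqnn 2) hn).
rewrite ler_pdivlMr //.
have [k0|k0] := lerP kappa 0.
  apply: le_trans (ler0n _ (G' u v)).
  apply: mulr_le0_ge0; last exact: ltW.
  exact: mulr_le0_ge0.
apply: le_trans (_ : n%:R * M u v <= _).
  rewrite mulrAC; apply: ler_wpM2r; first exact: M0.
  by rewrite -ler_pdivlMr.
apply: le_trans (cge u v) _; rewrite ler_nat; exact: Hge.
Qed.
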